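(* Fix $k\in\{0,1,\dots,9\}$ and even integers $A$ and $B$. Then there exist $\hat\kappa,\beta,d_1,\dots,d_k$ in the K3 lattice $L$ such that $(\hat\kappa,\hat\kappa)=B$, $(\beta,\beta)=A$, $(\hat\kappa,\beta)=0$, $(\hat\kappa,d_i)=1$ and $(\beta,d_i)=0$ for all $i$, and $(d_i,d_j)=-2\delta_{ij}$ for all $i,j$; moreover, $\hat\kappa,\beta,d_1,\dots,d_k$ generate a primitive sublattice of $L$.
   Context: The K3 lattice $L$ is the even unimodular lattice of signature $(3,19)$, with its symmetric bilinear form $(\cdot,\cdot)$. A sublattice $S\subset L$ is primitive if $L/S$ is torsion-free, i.e. every element of $L$ lying in $S\otimes\mathbb{R}$ lies in $S$. *)

(* Defs.v *)
(* The K3 lattice modelled concretely as Z^22 with Gram matrix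
   U + U + U + E8(-1) + E8(-1). *)
From HB Require Import structures.
From mathcomp Require Import all_boot all_order all_algebra.
Set Implicit Arguments. Unset Strict Implicit. Unset Printing Implicit Defensive.
Import Order.TTheory GRing.Theory Num.Theory.
Local Open Scope ring_scope.

(* adjacency of the E8 Dynkin diagram (Bourbaki labels 1..8 shifted to 0..7):
   chain 0-2-3-4-5-6-7, and 1 attached to 3 *)
Definition e8_edge (i j : nat) : bool :=
  [|| (i == 0%N) && (j == 2%N), (i == 2%N) && (j == 3%N),
      (i == 3%N) && (j == 4%N), (i == 4%N) && (j == 5%N),
      (i == 5%N) && (j == 6%N), (i == 6%N) && (j == 7%N)
    | (i == 1%N) && (j == 3%N)].

Definition e8m (i j : nat) : int :=
  if i == j then -2 else if e8_edge i j || e8_edge j i then 1 else 0.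

(* Gram matrix entry of U (+) U (+) U (+) E8(-1) (+) E8(-1) on indices 0..21 *)
Definition k3_entry (i j : nat) : int :=
  if (i < 6)%N && (j < 6)%N then
    (if (i./2 == j./2) && (i != j) then 1 else 0)
  else if [&& (6 <= i)%N, (i < 14)%N, (6 <= j)%N & (j < 14)%N] then
    e8m (i - 6) (j - 6)
  else if [&& (14 <= i)%N, (i < 22)%N, (14 <= j)%N & (j < 22)%N] then
    e8m (i - 14) (j - 14)
  else 0.

Definition K3gram : 'M[int]_22 := \matrix_(i < 22, j < 22) k3_entry i j.

Definition K3L := 'rV[int]_22.

Definition k3form (x y : K3L) : int := (x *m K3gram *m y^T) 0 0.

Definition in_span (s : seq K3L) (x : K3L) : Prop :=
  exists c : 'I_(size s) -> int, x = \sum_(i < size s) c i *: s`_i.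

(* the sublattice S generated by s is primitive: L/S is torsion-free *)
Definition primitive_span (s : seq K3L) : Prop :=
  forall (x : K3L) (n : int), n != 0 -> in_span s (n *: x) -> in_span s x.

(* Main.v *)
Require Import Defs.
From mathcomp Require Import all_boot all_order all_algebra.
From mathcomp Require Import ring.
Local Open Scope ring_scope.
Import GRing.Theory.

Definition csum (n : nat) (F : nat -> int) : int :=
  foldr (fun i acc => F i + acc) 0 (iota 0 n).

Lemma sum_csum n (F : nat -> int) : \sum_(i < n) F i = csum n F.
Proof.
rewrite /csum -(big_mkord xpredT F) /index_iota subn0.
elim: (iota 0 n) => [|a s IH]; first by rewrite big_nil.
by rewrite big_cons /= IH.
Qed.

Definition row_of (f : nat -> int) : K3L := \row_(q < 22) f q.

Definition cform (f g : nat -> int) : int :=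
  csum 22 (fun j => csum 22 (fun i => f i * k3_entry i j) * g j).

Lemma cformE f g : k3form (row_of f) (row_of g) = cform f g.
Proof.
rewrite /k3form /cform mxE -sum_csum; apply: eq_bigr => j _.
rewrite !mxE -sum_csum; congr (_ * _); apply: eq_bigr => i _.
by rewrite !mxE.
Qed.

Lemma formDl x y z : k3form (x + y) z = k3form x z + k3form y z.
Proof. by rewrite /k3form !mulmxDl mxE. Qed.
Lemma formDr x y z : k3form z (x + y) = k3form z x + k3form z y.
Proof. by rewrite /k3form linearD /= mulmxDr mxE. Qed.
Lemma formZl a x y : k3form (a *: x) y = a * k3form x y.
Proof. by rewrite /k3form -!scalemxAl mxE. Qed.
Lemma formZr a x y : k3form y (a *: x) = a * k3form y x.
Proof. by rewrite /k3form linearZ /= -scalemxAr mxE. Qed.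

Lemma prim_excl (s : seq K3L) (p : nat -> 'I_22) :
  (forall i j, (i < size s)%N -> (j < size s)%N -> s`_j 0 (p i) = (i == j)%:R) ->
  primitive_span s.
Proof.
move=> H x n n0 [c hc].
have ci : forall i : 'I_(size s), c i = n * x 0 (p i).
  move=> i; have := congr1 (fun M : K3L => M 0 (p i)) hc => /=.
  rewrite !mxE summxE (bigD1 i) //= big1 => [|j ji].
    by rewrite !mxE H // eqxx mulr1 addr0 => ->.
  rewrite mxE H // (_ : (i == j :> nat) = false) ?mulr0 //; apply/negbTE; rewrite eq_sym; exact: ji.
exists (fun i => x 0 (p i)).
have e : n *: x = n *: \sum_(i < size s) x 0 (p i) *: s`_i.
  rewrite hc scaler_sumr; apply: eq_bigr => i _; by rewrite ci scalerA.
apply/matrixP => a b; have := congr1 (fun M : K3L => M a b) e => /=.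
rewrite !mxE; exact: (mulfI n0).
Qed.

Definition excl_list : seq nat := [:: 6;7;10;12;14;15;18;20]%N.
Definition Dfun (m q : nat) : int :=
  match m with
  | 0 => if q == 0%N then 1 else if q == 1%N then -1 else 0
  | m'.+1 => if q == nth 0%N excl_list m' then 1 else 0
  end.
Definition K0f (q : nat) : int := if q \in [:: 1;3;8;9;13;16;17;21]%N then 1 else 0.
Definition E2f (q : nat) : int := if q == 2%N then 1 else 0.
Definition E5f (q : nat) : int := if q == 5%N then 1 else 0.
Definition B0f (q : nat) : int := if q == 4%N then 1 else 0.
Definition Pf (m : nat) : nat :=
  match m with 0 => 3 | 1 => 4 | 2 => 0 | m.+3 => nth 0%N excl_list m end.

Definition allchk : bool :=
  [&& cform K0f K0f == -8, cform K0f E2f == 1, cform E2f K0f == 1,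
      cform E2f E2f == 0, cform B0f B0f == 0, cform B0f E5f == 1,
      cform E5f B0f == 1, cform E5f E5f == 0, cform K0f B0f == 0,
      cform K0f E5f == 0, cform E2f B0f == 0 & cform E2f E5f == 0].

Lemma allchk_ok : allchk.
Proof. by vm_compute. Qed.

Lemma dchk : all (fun m => [&& cform K0f (Dfun m) == 1, cform E2f (Dfun m) == 0,
   cform B0f (Dfun m) == 0, cform E5f (Dfun m) == 0 &
   all (fun n => cform (Dfun m) (Dfun n) == if m == n then -2 else 0) (iota 0 9)])
  (iota 0 9).
Proof. by vm_compute. Qed.

Lemma pchk : all (fun i => [&& (Pf i < 22)%N, K0f (Pf i) == (i == 0%N)%:R,
   E2f (Pf i) == 0, B0f (Pf i) == (i == 1%N)%:R, E5f (Pf i) == 0 &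
   all (fun j => Dfun j (Pf i) == (i == j.+2)%:R) (iota 0 9)]) (iota 0 11).
Proof. by vm_compute. Qed.

Lemma dfacts m n : (m < 9)%N -> (n < 9)%N ->
  [/\ cform K0f (Dfun m) = 1, cform E2f (Dfun m) = 0,
      cform B0f (Dfun m) = 0, cform E5f (Dfun m) = 0 &
      cform (Dfun m) (Dfun n) = if m == n then -2 else 0].
Proof.
move=> hm hn; have := dchk; move/allP/(_ m); rewrite mem_iota hm => /(_ isT).
case/and5P => /eqP -> /eqP -> /eqP -> /eqP -> /allP/(_ n).
by rewrite mem_iota hn => /(_ isT)/eqP ->.
Qed.

Lemma pfacts i : (i < 11)%N ->
  [/\ (Pf i < 22)%N, K0f (Pf i) = (i == 0%N)%:R, E2f (Pf i) = 0,
      B0f (Pf i) = (i == 1%N)%:R & E5f (Pf i) = 0] /\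
      forall j, (j < 9)%N -> Dfun j (Pf i) = (i == j.+2)%:R.
Proof.
move=> hi; have := pchk; move/allP/(_ i); rewrite mem_iota hi => /(_ isT).
case/andP => -> /and5P [/eqP -> /eqP -> /eqP -> /eqP -> /allP H]; split=> // j hj.
by apply/eqP/H; rewrite mem_iota.
Qed.

Theorem lemma4p5 (k : nat) (A B : int) :
  (k <= 9)%N -> (2 %| A)%Z -> (2 %| B)%Z ->
  exists (kappa beta : K3L) (d : 'I_k -> K3L),
    [/\ k3form kappa kappa = B, k3form beta beta = A, k3form kappa beta = 0,
        (forall i, k3form kappa (d i) = 1 /\ k3form beta (d i) = 0) /\
        (forall i j, k3form (d i) (d j) = (if i == j then -2 else 0))
      & primitive_span (kappa :: beta :: [seq d i | i <- enum 'I_k])].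
Proof.
move=> hk hA hB.
have := allchk_ok; rewrite /allchk.
do 11! (case/andP=> /eqP ?); move/eqP=> ?.
set a := (A %/ 2)%Z; set c := (B %/ 2)%Z + 4.
exists (row_of K0f + c *: row_of E2f), (row_of B0f + a *: row_of E5f),
  (fun i => row_of (Dfun i)).
split.
- rewrite !(formDl, formDr, formZl, formZr, cformE).
  rewrite -[RHS](divzK hB) /c; do ?[match goal with H : cform _ _ = _ |- _ => rewrite H; clear H end].
  ring.
- rewrite !(formDl, formDr, formZl, formZr, cformE).
  rewrite -[RHS](divzK hA) /a; do ?[match goal with H : cform _ _ = _ |- _ => rewrite H; clear H end].
  ring.
- rewrite !(formDl, formDr, formZl, formZr, cformE).
  do ?[match goal with H : cform _ _ = _ |- _ => rewrite H; clear H end].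
  ring.
- split.
    move=> i; have hi : (i < 9)%N by exact: leq_trans (ltn_ord i) hk.
    case: (dfacts _ _ hi hi) => h1 h2 h3 h4 _.
    rewrite !(formDl, formDr, formZl, formZr, cformE) h1 h2 h3 h4; split; ring.
  move=> i j; have hi : (i < 9)%N by exact: leq_trans (ltn_ord i) hk.
  have hj : (j < 9)%N by exact: leq_trans (ltn_ord j) hk.
  by case: (dfacts _ _ hi hj) => _ _ _ _; rewrite cformE.
- apply: (@prim_excl _ (fun m => inord (Pf m))) => i j.
  have -> : [seq row_of (Dfun (nat_of_ord x)) | x : 'I_k <- enum 'I_k] = [seq row_of (Dfun m) | m <- iota 0 k].
    by rewrite -val_enum_ord -map_comp.
  rewrite /= size_map size_iota => hi hj.
  have hi11 : (i < 11)%N by apply: leq_trans hi _.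
  case: (pfacts _ hi11) => [[hP h1 h2 h3 h4] h5].
  case: j hj => [|[|j]] hj /=.
  + by rewrite !mxE inordK // h1 h2 mulr0 addr0.
  + by rewrite !mxE inordK // h3 h4 mulr0 addr0.
  + rewrite (nth_map 0%N) ?size_iota // nth_iota // add0n mxE inordK //.
    by apply: h5; apply: leq_trans hk.
Qed.
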